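(* Let $\Sigma,\Sigma',\Sigma''$ be weighted metric graphs with boundary, let $\phi\colon\Sigma\to\Sigma''$ be a continuous map, and let $\psi\colon\Sigma'\to\Sigma$ be a surjective harmonic map with $\psi(\partial\Sigma')\subset\partial\Sigma$. If $\phi\circ\psi$ is harmonic, then $\phi$ is harmonic.
   Context: Weighted metric graph with boundary: finite multigraph without loop edges, with for each oriented edge $e$ a length $\ell(e)>0$, parametrization $t_e\colon[0,\ell(e)]\to e$ ($t_e(0)=e^-$, $t_{\bar e}(x)=t_e(\ell(e)-x)$), weight $w(e)=w(\bar e)\in\mathbb Z_{>0}$, and boundary $\partial\Sigma\subset V(\Sigma)$; subdivisions allowed. A piecewise linear map $\phi\colon\Sigma'\to\Sigma$ is a continuous map such that after subdividing both: vertices map to vertices; each edge maps homeomorphically onto an edge or to a vertex; if $\phi(v')\in\partial\Sigma$ and $\phi$ is not constant on any neighbourhood of $v'$ then $v'\in\partial\Sigma'$; and if $\phi(e')=e$ (respecting orientations) then $\phi\circ t_{e'}(x)=t_e(\frac{\ell(e)}{\ell(e')}x)$. The expansion factor is $d_{e'}(\phi)=\ell(e)/\ell(e')$, or $0$ if $e'$ maps to a vertex. $\phi$ is harmonic at a point $v'$ (made a vertex) if $\sum_{e'^-=v',\,e'\mapsto e}\frac{w(e')}{w(e)}d_{e'}(\phi)$ is independent of the choice of edge $e$ starting at $\phi(v')$; $\phi$ is harmonic if it is piecewise linear and harmonic at every point of $\Sigma'\setminus\partial\Sigma'$. *)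

(* Defs.v *)
From HB Require Import structures.
From mathcomp Require Import all_boot all_order all_algebra.
From mathcomp Require Import reals.
Set Implicit Arguments. Unset Strict Implicit. Unset Printing Implicit Defensive.
Import Order.TTheory GRing.Theory Num.Theory.
Local Open Scope ring_scope.

(* Each (unoriented) edge e comes with a
   reference orientation msrc e -> mtgt e; the two oriented edges are (e,true)
   (= e) and (e,false) (= ebar).  Lengths and weights are attached to the
   unoriented edge, so l(ebar)=l(e), w(ebar)=w(e). *)
Record mgraph (R : realType) := MGraph {
  mV : finType;
  mE : finType;
  msrc : mE -> mV;
  mtgt : mE -> mV;
  mlen : mE -> R;
  mwt : mE -> nat;
  mbnd : pred mV;
  msrc_tgt : forall e, msrc e != mtgt e;
  mlen_gt0 : forall e, 0 < mlen e;
  mwt_gt0 : forall e, (0 < mwt e)%N }.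

(* Points: a vertex, or an interior point (e,x), 0<x<l(e), of an edge e
   (coordinate measured from msrc e). *)
Definition rawpt R (G : mgraph R) := (mV G + (mE G * R))%type.
Definition validpt R (G : mgraph R) (p : rawpt G) : bool :=
  match p with inl _ => true | inr (e, x) => (0 < x) && (x < mlen e) end.
Definition point R (G : mgraph R) := {p : rawpt G | validpt p}.

Definition vpt R (G : mgraph R) (v : mV G) : point G :=
  exist (fun p => validpt p) (inl v) isT.

Definition isbnd R (G : mgraph R) (p : point G) : bool :=
  match val p with inl v => mbnd v | inr _ => false end.

Definition oedge R (G : mgraph R) := (mE G * bool)%type.
Definition osrc R (G : mgraph R) (a : oedge G) : mV G :=
  if a.2 then msrc a.1 else mtgt a.1.
Definition otgt R (G : mgraph R) (a : oedge G) : mV G :=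
  if a.2 then mtgt a.1 else msrc a.1.
Definition olen R (G : mgraph R) (a : oedge G) : R := mlen a.1.

(* Parametrization t_a : [0, l(a)] -> G (clamped outside), with
   t_a(0) = a^-, t_abar(x) = t_a(l(a) - x). *)
Definition param R (G : mgraph R) (a : oedge G) (x : R) : point G :=
  if x <= 0 then vpt (osrc a)
  else if olen a <= x then vpt (otgt a)
  else insubd (vpt (osrc a)) (inr (a.1, if a.2 then x else mlen a.1 - x)).

(* Topology: quotient topology of the union of the edge intervals. *)
Definition gopen R (G : mgraph R) (U : point G -> Prop) : Prop :=
  forall (e : mE G) (x : R), 0 <= x <= mlen e -> U (param (e, true) x) ->
  exists2 eps : R, 0 < eps & forall y : R, 0 <= y <= mlen e ->
     `|y - x| < eps -> U (param (e, true) y).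

Definition gcontinuous R (G H : mgraph R) (f : point G -> point H) : Prop :=
  forall U : point H -> Prop, gopen U -> gopen (fun p => U (f p)).

(* Piecewise linearity: each edge of G splits into finitely many segments, on
   each of which f is constant or maps linearly (factor d > 0) into a single
   oriented edge of H, as x |-> t_b(beta + d (x - u)).  Together with the
   boundary condition this is equivalent to the "after subdividing" def. *)
Definition lin_piece R (G H : mgraph R) (f : point G -> point H)
    (a : oedge G) (u v : R) : Prop :=
  (forall x, u <= x <= v -> f (param a x) = f (param a u)) \/
  exists (b : oedge H) (beta d : R),
    [/\ 0 < d, 0 <= beta, beta + d * (v - u) <= olen b &
        forall x, u <= x <= v -> f (param a x) = param b (beta + d * (x - u))].

Definition pl_edge R (G H : mgraph R) (f : point G -> point H) (e : mE G) : Prop :=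
  exists (n : nat) (u : nat -> R),
    [/\ u 0%N = 0, u n = mlen e,
        forall i, (i < n)%N -> u i < u i.+1 &
        forall i, (i < n)%N -> lin_piece f (e, true) (u i) (u i.+1)].

Definition pl_map R (G H : mgraph R) (f : point G -> point H) : Prop :=
  [/\ gcontinuous f,
      forall e, pl_edge f e &
      forall p, isbnd (f p) ->
        ~ (exists U, [/\ gopen U, U p & forall q, U q -> f q = f p]) ->
        isbnd p].

(* Directions at a point p: oriented edges a such that p = t_a(s) with
   0 <= s < l(a); offset p a = Some s.  After making p a vertex, these are
   exactly the edges starting at p. *)
Definition offset R (G : mgraph R) (p : point G) (a : oedge G) : option R :=
  match val p with
  | inl v => if osrc a == v then Some 0 else None
  | inr (e, x) => if a.1 == e then Some (if a.2 then x else mlen e - x) else None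
  end.
Definition isdir R (G : mgraph R) (p : point G) (a : oedge G) : bool :=
  offset p a != None.

Definition germ_const R (G H : mgraph R) (f : point G -> point H)
    (p : point G) (a : oedge G) : Prop :=
  exists s, offset p a = Some s /\
  exists2 eta : R, 0 < eta & forall t, 0 <= t <= eta -> f (param a (s + t)) = f p.

Definition germ_lin R (G H : mgraph R) (f : point G -> point H)
    (p : point G) (a : oedge G) (b : oedge H) (d : R) : Prop :=
  exists s r, [/\ offset p a = Some s, offset (f p) b = Some r, 0 < d &
  exists2 eta : R, 0 < eta &
    [/\ s + eta <= olen a, r + d * eta <= olen b &
        forall t, 0 <= t <= eta -> f (param a (s + t)) = param b (r + d * t)]].

(* Harmonicity at p (made a vertex): m a = image direction, dd a = expansion
   factor d_a (0 if contracted); the sum over a |-> b of w(a)/w(b) d_a is the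
   same constant c for every direction b at f p. *)
Definition harmonic_at R (G H : mgraph R) (f : point G -> point H) (p : point G) : Prop :=
  exists (m : oedge G -> oedge H) (dd : oedge G -> R) (c : R),
  (forall a, isdir p a -> (dd a = 0 /\ germ_const f p a) \/ germ_lin f p a (m a) (dd a)) /\
  (forall b, isdir (f p) b ->
     \sum_(a | isdir p a && (m a == b)) ((mwt a.1)%:R / (mwt b.1)%:R * dd a) = c).

Definition harmonic R (G H : mgraph R) (f : point G -> point H) : Prop :=
  pl_map f /\ forall p, ~~ isbnd p -> harmonic_at f p.

(* Main.v *)
Require Import Defs.
From mathcomp Require Import all_boot all_order all_algebra.
From mathcomp Require Import reals.
From mathcomp Require Import ring lra zify.
From Stdlib Require Import ClassicalEpsilon.
Set Implicit Arguments. Unset Strict Implicit. Unset Printing Implicit Defensive.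
Import Order.TTheory GRing.Theory Num.Theory.
Local Open Scope ring_scope.

Lemma pt_eq (R : realType) (G : mgraph R) (p q : point G) : val p = val q -> p = q.
Proof. exact: val_inj. Qed.

Lemma param_val (R : realType) (G : mgraph R) (a : oedge G) (x : R) : 0 < x -> x < olen a ->
  val (param a x) = inr (a.1, if a.2 then x else mlen a.1 - x).
Proof.
move=> h0 h1; rewrite /param.
have -> : (x <= 0) = false by apply/negbTE; rewrite -ltNge; lra.
have -> : (olen a <= x) = false by apply/negbTE; rewrite -ltNge; lra.
rewrite insubdK //.
rewrite /olen in h1 *; case: a.2 => /=; apply/andP; split; lra.
Qed.

Lemma param_le0 (R : realType) (G : mgraph R) (a : oedge G) (x : R) : x <= 0 ->
  param a x = vpt (osrc a).
Proof. by move=> h; rewrite /param h. Qed.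

Lemma param_ge (R : realType) (G : mgraph R) (a : oedge G) (x : R) : olen a <= x ->
  param a x = vpt (otgt a).
Proof.
move=> h; rewrite /param; have hl := mlen_gt0 a.1; rewrite /olen in h hl *.
have -> : (x <= 0) = false by apply/negbTE; rewrite -ltNge; lra.
by rewrite h.
Qed.

Definition orev (R : realType) (G : mgraph R) (a : oedge G) : oedge G := (a.1, ~~ a.2).

Lemma param_rev (R : realType) (G : mgraph R) (a : oedge G) (y : R) :
  param (orev a) y = param a (olen a - y).
Proof.
have hl := mlen_gt0 a.1.
case: (lerP y 0) => h0.
  rewrite param_le0 // param_ge; last by rewrite /olen; lra.
  by rewrite /osrc /otgt /orev /=; case: a.2.
case: (lerP (olen a) y) => h1.
  rewrite param_ge // param_le0; last by lra.
  by rewrite /osrc /otgt /orev /=; case: a.2.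
rewrite /olen in h1.
apply: pt_eq; rewrite (@param_val _ _ (orev a) y h0) //.
have hA : 0 < olen a - y by rewrite /olen; lra.
have hB : olen a - y < olen a by rewrite /olen; lra.
rewrite (@param_val _ _ a (olen a - y) hA hB) /olen.
rewrite /orev /=; case: a.2 => //=; congr (inr (_, _)); lra.
Qed.

Lemma param_norm (R : realType) (G : mgraph R) (a : oedge G) (y : R) :
  param a y = param (a.1, true) (if a.2 then y else mlen a.1 - y).
Proof.
case: a => e [] //=.
by rewrite -[(e,false)]/(orev (e,true)) param_rev.
Qed.

Lemma offset_param (R : realType) (G : mgraph R) (a : oedge G) (s : R) :
  0 <= s -> s < olen a -> offset (param a s) a = Some s.
Proof.
move=> h0 h1; case: (lerP s 0) => hs.
  rewrite param_le0 // /offset /= eqxx; congr Some; lra.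
rewrite /offset param_val // eqxx; case: a.2 => //; congr Some; lra.
Qed.

Lemma param_offset (R : realType) (G : mgraph R) (p : point G) (a : oedge G) (s : R) :
  offset p a = Some s -> [/\ p = param a s, 0 <= s & s < olen a].
Proof.
rewrite /offset; case: p => [[v|[e x]] hv] /=.
  case: eqP => // <- [<-]; split; rewrite ?lexx ?mlen_gt0 //.
  by rewrite param_le0 //; apply: pt_eq.
case: eqP => // ea [<-]; have /andP [hx0 hx1] := hv.
have hl : olen a = mlen e by rewrite /olen ea.
have hs0 : 0 < (if a.2 then x else mlen e - x) by case: a.2; lra.
have hs1 : (if a.2 then x else mlen e - x) < olen a by rewrite hl; case: a.2; lra.
split; [| lra | lra].
apply: pt_eq; rewrite param_val //= ea; case: a.2 => //=; congr (inr (_, _)); lra.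
Qed.

Lemma param_int_inj (R : realType) (G : mgraph R) (e e' : mE G) (x y : R) :
  0 < x -> x < mlen e -> param (e', true) y = param (e, true) x -> e' = e /\ y = x.
Proof.
move=> h0 h1 /(congr1 val); rewrite (@param_val _ _ (e,true) x) //=.
case: (lerP y 0) => hy0; first by rewrite param_le0.
case: (lerP (mlen e') y) => hy1; first by rewrite param_ge.
by rewrite param_val //= => -[-> ->].
Qed.

Lemma vpt_inj (R : realType) (G : mgraph R) (v w : mV G) : vpt v = vpt w -> v = w.
Proof. by move/(congr1 val) => [->]. Qed.

Lemma param_inj (R : realType) (G : mgraph R) (a : oedge G) (x y : R) :
  0 <= x <= olen a -> 0 <= y <= olen a -> param a x = param a y -> x = y.
Proof.
move=> /andP [hx0 hx1] /andP [hy0 hy1].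
rewrite (param_norm a x) (param_norm a y) /olen in hx1 hy1 * => E.
have hl := mlen_gt0 a.1.
set X := (if a.2 then x else mlen a.1 - x) in E.
set Y := (if a.2 then y else mlen a.1 - y) in E.
have XY : X = Y -> x = y by rewrite /X /Y; case: a.2 => //; lra.
case: (ltrP 0 X) => hX0.
  case: (ltrP X (mlen a.1)) => hX1.
    by apply: XY; case: (param_int_inj hX0 hX1 (esym E)).
  case: (ltrP 0 Y) => hY0.
    case: (ltrP Y (mlen a.1)) => hY1.
      by apply: XY; case: (param_int_inj hY0 hY1 E).
    apply: XY; rewrite /X /Y in hX1 hY1 *; case: a.2 in hX1 hY1 *; lra.
  rewrite (@param_ge _ _ (a.1,true) X hX1) (@param_le0 _ _ (a.1,true) Y hY0) in E.
  by move/vpt_inj: E; rewrite /osrc /otgt /= => E; have := msrc_tgt a.1; rewrite E eqxx.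
case: (ltrP 0 Y) => hY0.
  case: (ltrP Y (mlen a.1)) => hY1.
    by apply: XY; case: (param_int_inj hY0 hY1 E).
  rewrite (@param_le0 _ _ (a.1,true) X hX0) (@param_ge _ _ (a.1,true) Y hY1) in E.
  by move/vpt_inj: E; rewrite /osrc /otgt /= => E; have := msrc_tgt a.1; rewrite E eqxx.
apply: XY; rewrite /X /Y in hX0 hY0 *; case: a.2 in hX0 hY0 *; lra.
Qed.

Lemma param_eq_int (R : realType) (G : mgraph R) (b b' : oedge G) (y y' : R) :
  0 < y -> y < olen b -> param b y = param b' y' ->
  b'.1 = b.1 /\ (if b.2 == b'.2 then y' = y else y' = mlen b.1 - y).
Proof.
move=> h0 h1; rewrite (param_norm b) (param_norm b') => E.
have hY0 : 0 < (if b.2 then y else mlen b.1 - y) by rewrite /olen in h1; case: b.2; lra.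
have hY1 : (if b.2 then y else mlen b.1 - y) < mlen b.1 by rewrite /olen in h1; case: b.2; lra.
case: (param_int_inj hY0 hY1 (esym E)) => e1 ey; split => //.
move: ey; rewrite e1; case: b.2; case: b'.2 => /=; lra.
Qed.

Lemma pair_eq2 (A B : Type) (x y : A * B) : x.1 = y.1 -> x.2 = y.2 -> x = y.
Proof. by case: x; case: y => /= ? ? ? ? -> ->. Qed.

Lemma germ_lin_uniq (R : realType) (G H : mgraph R) (f : point G -> point H) p a b d b' d' :
  germ_lin f p a b d -> germ_lin f p a b' d' -> b = b' /\ d = d'.
Proof.
move=> [s [r [hs hr hd [eta he [h1 h2 h3]]]]] [s' [r' [hs' hr' hd' [eta' he' [h1' h2' h3']]]]].
move: hs'; rewrite hs => -[es]; subst s'.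
have [_ hr0 _] := param_offset hr.
have [_ hr0' _] := param_offset hr'.
set e0 := Num.min eta eta'.
have he0 : 0 < e0 by rewrite lt_min he he'.
have e0a : e0 <= eta by rewrite ge_min lexx.
have e0b : e0 <= eta' by rewrite ge_min lexx orbT.
have key : forall t, 0 < t -> t < e0 ->
   b'.1 = b.1 /\ (if b.2 == b'.2 then r' + d' * t = r + d * t else r' + d' * t = mlen b.1 - (r + d * t)).
  move=> t t0 t1.
  have E : param b (r + d * t) = param b' (r' + d' * t).
    by rewrite -h3 ?h3' //; apply/andP; split; lra.
  apply: param_eq_int E; first by nra.
  have : d * t < d * eta by nra.
  lra.
have [k1 k2] := key (e0 / 2) ltac:(lra) ltac:(lra).
have [_ k3] := key (e0 / 4) ltac:(lra) ltac:(lra).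
move: k2 k3; case: eqP => b2 k2 k3.
  have dd : d = d' by nra.
  by split => //; apply: pair_eq2.
exfalso; clear -k2 k3 hd hd' he0; nra.
Qed.

Lemma germ_const_lin (R : realType) (G H : mgraph R) (f : point G -> point H) p a b d :
  germ_const f p a -> germ_lin f p a b d -> False.
Proof.
move=> [s [hs [eta he h]]] [s' [r [hs' hr hd [eta' he' [h1 h2 h3]]]]].
move: hs'; rewrite hs => -[es]; subst s'.
have [hp hr0 _] := param_offset hr.
set e0 := Num.min eta eta'.
have he0 : 0 < e0 by rewrite lt_min he he'.
have e0a : e0 <= eta by rewrite ge_min lexx.
have e0b : e0 <= eta' by rewrite ge_min lexx orbT.
have E : param b (r + d * e0) = param b (r + d * 0).
  rewrite -h3; last by apply/andP; split; lra.
  rewrite h; last by apply/andP; split; lra.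
  by rewrite mulr0 addr0.
have hde : d * e0 <= d * eta' by nra.
have hde0 : 0 < d * e0 by nra.
have : r + d * e0 = r + d * 0.
  by apply: param_inj E; apply/andP; split; lra.
lra.
Qed.

Lemma comp_lin_lin (R : realType) (G H K : mgraph R) (psi : point G -> point H)
   (phi : point H -> point K) p a b d1 b2 d2 :
  germ_lin psi p a b d1 -> germ_lin phi (psi p) b b2 d2 ->
  germ_lin (fun x => phi (psi x)) p a b2 (d2 * d1).
Proof.
move=> [s [r [hs hr hd [eta he [h1 h2 h3]]]]] [r' [r2 [hr' hr2 hd2 [eta2 he2 [g1 g2 g3]]]]].
move: hr'; rewrite hr => -[er]; subst r'.
set e0 := Num.min eta (eta2 / d1).
have he0 : 0 < e0 by rewrite lt_min he /=; apply: divr_gt0.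
have e0a : e0 <= eta by rewrite ge_min lexx.
have e0b : e0 <= eta2 / d1 by rewrite ge_min lexx orbT.
have e0c : d1 * e0 <= eta2.
  by move: e0b; rewrite ler_pdivlMr // mulrC.
exists s, r2; split => //; first exact: mulr_gt0.
exists e0 => //; split; first lra.
  have : d2 * (d1 * e0) <= d2 * eta2 by nra.
  rewrite mulrA; lra.
move=> t /andP [t0 t1].
rewrite h3; last by apply/andP; split; lra.
rewrite g3; last by apply/andP; split; nra.
by rewrite mulrA.
Qed.

Lemma comp_lin_const (R : realType) (G H K : mgraph R) (psi : point G -> point H)
   (phi : point H -> point K) p a b d1 :
  germ_lin psi p a b d1 -> germ_const phi (psi p) b ->
  germ_const (fun x => phi (psi x)) p a.
Proof.
move=> [s [r [hs hr hd [eta he [h1 h2 h3]]]]] [r' [hr' [eta2 he2 g]]].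
move: hr'; rewrite hr => -[er]; subst r'.
set e0 := Num.min eta (eta2 / d1).
have he0 : 0 < e0 by rewrite lt_min he /=; apply: divr_gt0.
have e0a : e0 <= eta by rewrite ge_min lexx.
have e0b : e0 <= eta2 / d1 by rewrite ge_min lexx orbT.
have e0c : d1 * e0 <= eta2.
  by move: e0b; rewrite ler_pdivlMr // mulrC.
exists s; split => //; exists e0 => // t /andP [t0 t1].
rewrite h3; last by apply/andP; split; lra.
rewrite g //; apply/andP; split; nra.
Qed.

Lemma div_lin (R : realType) (G H K : mgraph R) (psi : point G -> point H)
   (phi : point H -> point K) p a b d1 b2 d :
  germ_lin psi p a b d1 -> germ_lin (fun x => phi (psi x)) p a b2 d ->
  germ_lin phi (psi p) b b2 (d / d1).
Proof.
move=> [s [r [hs hr hd [eta he [h1 h2 h3]]]]] [s' [r2 [hs' hr2 hd2 [eta2 he2 [g1 g2 g3]]]]].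
move: hs'; rewrite hs => -[es]; subst s'.
set e0 := Num.min eta eta2.
have he0 : 0 < e0 by rewrite lt_min he he2.
have e0a : e0 <= eta by rewrite ge_min lexx.
have e0b : e0 <= eta2 by rewrite ge_min lexx orbT.
have d1n : d1 != 0 by rewrite gt_eqF.
exists r, r2; split => //; first exact: divr_gt0.
exists (d1 * e0); first exact: mulr_gt0.
split.
- have : d1 * e0 <= d1 * eta by nra.
  lra.
- have -> : d / d1 * (d1 * e0) = d * e0 by field.
  have : d * e0 <= d * eta2 by nra.
  lra.
move=> t /andP [t0 t1].
have ht : t = d1 * (t / d1) by field.
have t0' : 0 <= t / d1 by apply: divr_ge0 => //; lra.
have t1' : t / d1 <= e0 by rewrite ler_pdivrMr // mulrC.
rewrite {1}ht -h3; last by apply/andP; split; lra.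
rewrite g3; last by apply/andP; split; lra.
congr (param _ (_ + _)); field; by [].
Qed.

Lemma div_const (R : realType) (G H K : mgraph R) (psi : point G -> point H)
   (phi : point H -> point K) p a b d1 :
  germ_lin psi p a b d1 -> germ_const (fun x => phi (psi x)) p a ->
  germ_const phi (psi p) b.
Proof.
move=> [s [r [hs hr hd [eta he [h1 h2 h3]]]]] [s' [hs' [eta2 he2 g]]].
move: hs'; rewrite hs => -[es]; subst s'.
set e0 := Num.min eta eta2.
have he0 : 0 < e0 by rewrite lt_min he he2.
have e0a : e0 <= eta by rewrite ge_min lexx.
have e0b : e0 <= eta2 by rewrite ge_min lexx orbT.
have d1n : d1 != 0 by rewrite gt_eqF.
exists r; split => //; exists (d1 * e0); first exact: mulr_gt0.
move=> t /andP [t0 t1].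
have ht : t = d1 * (t / d1) by field.
have t0' : 0 <= t / d1 by apply: divr_ge0 => //; lra.
have t1' : t / d1 <= e0 by rewrite ler_pdivrMr // mulrC.
rewrite {1}ht -h3; last by apply/andP; split; lra.
by rewrite g //; apply/andP; split; lra.
Qed.

Lemma part_mono (R : realType) (u : nat -> R) (n : nat) :
  (forall i, (i < n)%N -> u i < u i.+1) ->
  forall i j, (i <= j)%N -> (j <= n)%N -> u i <= u j.
Proof.
move=> hu i j; elim: j => [|j IH] hij hjn.
  by have -> : i = 0%N by lia.
case: (ltnP i j.+1) => h.
  have := hu j ltac:(lia); have := IH ltac:(lia) ltac:(lia); lra.
by have -> : i = j.+1 by lia.
Qed.

Lemma locate_right (R : realType) (u : nat -> R) (n : nat) (x : R) :
  (forall i, (i < n)%N -> u i < u i.+1) -> u 0%N <= x -> x < u n ->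
  exists i, [/\ (i < n)%N, u i <= x & x < u i.+1].
Proof.
move=> hu h0 h1.
have : forall k, (k < n)%N -> x < u k.+1 -> exists i, [/\ (i <= k)%N, u i <= x & x < u i.+1].
  elim=> [|k IH] hk hx; first by exists 0%N.
  case: (ltrP x (u k.+1)) => h.
    by have [i [hi ? ?]] := IH ltac:(lia) h; exists i; split => //; lia.
  by exists k.+1.
case: n hu h1 => [|n] hu h1; first lra.
move=> /(_ n ltac:(lia) h1) [i [hi ? ?]]; exists i; split => //; lia.
Qed.

Lemma locate_left (R : realType) (u : nat -> R) (n : nat) (x : R) :
  (forall i, (i < n)%N -> u i < u i.+1) -> u 0%N < x -> x <= u n ->
  exists i, [/\ (i < n)%N, u i < x & x <= u i.+1].
Proof.
move=> hu h0 h1.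
have : forall k, (k < n)%N -> x <= u k.+1 -> exists i, [/\ (i <= k)%N, u i < x & x <= u i.+1].
  elim=> [|k IH] hk hx; first by exists 0%N.
  case: (lerP x (u k.+1)) => h.
    by have [i [hi ? ?]] := IH ltac:(lia) h; exists i; split => //; lia.
  by exists k.+1.
case: n hu h1 => [|n] hu h1; first lra.
move=> /(_ n ltac:(lia) h1) [i [hi ? ?]]; exists i; split => //; lia.
Qed.

Lemma locate_closed (R : realType) (u : nat -> R) (n : nat) (x : R) :
  (forall i, (i < n)%N -> u i < u i.+1) -> u 0%N <= x -> x <= u n -> u 0%N < u n ->
  exists i, [/\ (i < n)%N, u i <= x & x <= u i.+1].
Proof.
move=> hu h0 h1 h2.
case: (ltrP x (u n)) => h.
  have [i [? ? ?]] := locate_right hu h0 h; exists i; split => //; lra.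
have [i [? ? ?]] := locate_left hu (lt_le_trans h2 h) h1; exists i; split => //; lra.
Qed.

Lemma param_false (R : realType) (G : mgraph R) (e : mE G) (y : R) :
  param (e, false) y = param (e, true) (mlen e - y).
Proof. exact: (@param_rev _ _ (e, true) y). Qed.

Lemma part_bounds (R : realType) (u : nat -> R) (n : nat) (L : R) :
  u 0%N = 0 -> u n = L -> (forall i, (i < n)%N -> u i < u i.+1) ->
  forall i, (i <= n)%N -> 0 <= u i /\ u i <= L.
Proof.
move=> h0 hn hu i hi; split.
  by rewrite -h0; apply: part_mono hu _ _ _ hi.
by rewrite -hn; apply: part_mono hu _ _ hi _.
Qed.

Lemma germ_of_pl (R : realType) (G H : mgraph R) (f : point G -> point H) :
  (forall e, pl_edge f e) ->
  forall p a s, offset p a = Some s -> germ_const f p a \/ exists b d, germ_lin f p a b d.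
Proof.
move=> hpl p [e o] s hs.
have [hp hs0 hs1] := param_offset hs.
rewrite /olen /= in hs1.
have [n [u [u0 un hu hpc]]] := hpl e.
have hb := part_bounds u0 un hu.
case: o hs hp => hs hp.
- have [i [hi hui hui1]] := locate_right hu (x := s) ltac:(by rewrite u0) ltac:(by rewrite un).
  have [hb0 _] := hb i ltac:(lia).
  have [_ hb1] := hb i.+1 ltac:(lia).
  case: (hpc i hi) => [hc | [b [be [d [hd hbe hbl hl]]]]].
  + left; exists s; split => //; exists (u i.+1 - s); first lra.
    move=> t /andP [t0 t1]; rewrite hp hc ?(hc s) //; apply/andP; split; lra.
  + right; exists b, d; exists s, (be + d * (s - u i)).
    have hfp : f p = param b (be + d * (s - u i)) by rewrite hp hl //; apply/andP; split; lra.
    have k1 : d * (s - u i) < d * (u i.+1 - u i) by nra.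
    have k2 : 0 <= d * (s - u i) by nra.
    split => //.
      by rewrite hfp; apply: offset_param; lra.
    exists (u i.+1 - s); first lra.
    split; rewrite /olen /=; [lra | | ].
      have -> : be + d * (s - u i) + d * (u i.+1 - s) = be + d * (u i.+1 - u i) by ring.
      done.
    move=> t /andP [t0 t1]; rewrite hl; last by apply/andP; split; lra.
    congr (param _ _); ring.
- set x := mlen e - s.
  have hpx : p = param (e, true) x by rewrite hp param_false.
  have [i [hi hui hui1]] := locate_left hu (x := x) ltac:(rewrite u0 /x; lra) ltac:(by rewrite un /x; lra).
  have [hb0 _] := hb i ltac:(lia).
  have [_ hb1] := hb i.+1 ltac:(lia).
  have hpt : forall t, param (e, false) (s + t) = param (e, true) (x - t).
    by move=> t; rewrite param_false /x; congr (param _ _); ring.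
  case: (hpc i hi) => [hc | [b [be [d [hd hbe hbl hl]]]]].
  + left; exists s; split => //; exists (x - u i); first lra.
    move=> t /andP [t0 t1]; rewrite hpt hpx hc ?(hc x) //; apply/andP; split; lra.
  + right; exists (orev b), d.
    set r := olen b - be - d * (x - u i).
    exists s, r.
    have k1 : d * (x - u i) <= d * (u i.+1 - u i) by nra.
    have k2 : 0 < d * (x - u i) by nra.
    have hfp : f p = param (orev b) r.
      rewrite hpx hl; last by apply/andP; split; lra.
      by rewrite param_rev /r; congr (param _ _); ring.
    split => //.
      by rewrite hfp; apply: offset_param; rewrite /r /olen /orev /= in hbl *; lra.
    exists (x - u i); first lra.
    split; rewrite /olen /orev /= in hbl *; [rewrite /x; lra | rewrite /r /olen /=; lra | ].
    move=> t /andP [t0 t1]; rewrite hpt hl; last by apply/andP; split; lra.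
    rewrite param_rev /r; congr (param _ _); rewrite /olen /orev /=; ring.
Qed.

Lemma fin_min (R : realType) (T : eqType) (s : seq T) (A : T -> R -> Prop) :
  (forall x d d', 0 < d' -> d' <= d -> A x d -> A x d') ->
  (forall x, x \in s -> exists2 d, 0 < d & A x d) ->
  exists2 d, 0 < d & forall x, x \in s -> A x d.
Proof.
move=> hm; elim: s => [|y s IH] hs; first by exists 1 => //; rewrite ltr01.
have [d1 h1 hA1] := hs y (mem_head _ _).
have [d2 h2 hA2] : exists2 d, 0 < d & forall x, x \in s -> A x d.
  by apply: IH => x hx; apply: hs; rewrite inE hx orbT.
exists (Num.min d1 d2); first by rewrite lt_min h1 h2.
move=> x; rewrite inE => /orP [/eqP -> | hx].
  by apply: hm hA1; rewrite ?lt_min ?h1 ?h2 ?ge_min ?lexx.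
by apply: hm (hA2 x hx); rewrite ?lt_min ?h1 ?h2 ?ge_min ?lexx ?orbT.
Qed.

Lemma good_same (R : realType) (G H : mgraph R) (psi : point G -> point H)
   (e : mE G) (u v : R) (b : oedge H) (be d0 s : R) :
  0 <= u -> u < v -> v <= mlen e -> 0 < d0 -> 0 <= be ->
  be <= s -> s < be + d0 * (v - u) -> be + d0 * (v - u) <= olen b ->
  (forall x, u <= x <= v -> psi (param (e, true) x) = param b (be + d0 * (x - u))) ->
  exists p a d, psi p = param b s /\ germ_lin psi p a b d.
Proof.
move=> hu huv hv hd hbe h1 h2 h3 hl.
set k := (s - be) / d0.
have hk : d0 * k = s - be by rewrite /k; field; rewrite gt_eqF.
have k0 : 0 <= k by rewrite /k; apply: divr_ge0 => //; lra.
have k1 : k < v - u by rewrite /k ltr_pdivrMr // mulrC; lra.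
set x0 := u + k.
have hpx : psi (param (e, true) x0) = param b s.
  by rewrite hl; [congr (param _ _); rewrite /x0; lra | apply/andP; split; rewrite /x0; lra].
exists (param (e, true) x0), (e, true), d0; split => //.
exists x0, s; split => //.
- by apply: offset_param; rewrite /olen /x0 /=; lra.
- by rewrite hpx; apply: offset_param; lra.
exists (v - x0); first by rewrite /x0; lra.
split; first by rewrite /olen /x0 /=; lra.
  rewrite /x0; have -> : s + d0 * (v - (u + k)) = be + d0 * (v - u) by nra.
  done.
move=> t /andP [t0 t1]; rewrite hl; last by apply/andP; split; rewrite /x0 in t1 *; lra.
congr (param _ _); rewrite /x0; nra.
Qed.

Lemma good_opp (R : realType) (G H : mgraph R) (psi : point G -> point H)
   (e : mE G) (u v : R) (b : oedge H) (be d0 s : R) :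
  0 <= u -> u < v -> v <= mlen e -> 0 < d0 -> 0 <= be -> 0 <= s ->
  be < olen b - s -> olen b - s <= be + d0 * (v - u) -> be + d0 * (v - u) <= olen b ->
  (forall x, u <= x <= v -> psi (param (e, true) x) = param (orev b) (be + d0 * (x - u))) ->
  exists p a d, psi p = param b s /\ germ_lin psi p a b d.
Proof.
move=> hu huv hv hd hbe hs h1 h2 h3 hl.
set k := (olen b - s - be) / d0.
have hk : d0 * k = olen b - s - be by rewrite /k; field; rewrite gt_eqF.
have k0 : 0 < k by rewrite /k; apply: divr_gt0 => //; lra.
have k1 : k <= v - u by rewrite /k ler_pdivrMr // mulrC; lra.
set x0 := u + k.
have hpx : psi (param (e, true) x0) = param b s.
  rewrite hl; last by apply/andP; split; rewrite /x0; lra.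
  by rewrite param_rev; congr (param _ _); rewrite /x0; lra.
exists (param (e, true) x0), (e, false), d0; split => //.
exists (mlen e - x0), s; split => //.
- have -> : param (e, true) x0 = param (e, false) (mlen e - x0).
    by rewrite param_false; congr (param _ _); ring.
  by apply: offset_param; rewrite /olen /x0 /=; lra.
- by rewrite hpx; apply: offset_param; rewrite /olen in h1 *; lra.
exists k => //.
split; first by rewrite /olen /x0 /=; lra.
  lra.
move=> t /andP [t0 t1].
rewrite param_false hl; last by apply/andP; split; rewrite /x0; lra.
rewrite param_rev; congr (param _ _); rewrite /x0 /orev /olen /= in hk *; nra.
Qed.

Lemma avoid_pt (R : realType) (H : mgraph R) (b : oedge H) (s : R) (w : point H) :
  0 <= s -> s < olen b ->
  exists2 dl, 0 < dl & forall t, 0 < t -> t < dl -> t < olen b - s -> param b (s + t) != w.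
Proof.
move=> hs0 hs1.
case: (classic (exists t0, [/\ 0 < t0, t0 < olen b - s & param b (s + t0) = w])).
  move=> [t0 [t00 t01 ht0]]; exists t0 => // t t1 t2 t3; apply/eqP => E.
  have : s + t = s + t0.
    by apply: param_inj; [apply/andP; split; lra | apply/andP; split; lra | rewrite E ht0].
  lra.
move=> hn; exists 1; first exact: ltr01.
move=> t t1 t2 t3; apply/eqP => E; apply: hn; exists t; split => //.
Qed.

Lemma LC (R : realType) (S S' : mgraph R) (psi : point S' -> point S) :
  (forall e, pl_edge psi e) -> (forall q, exists p, psi p = q) ->
  forall q b s, offset q b = Some s ->
  exists p a d, psi p = q /\ germ_lin psi p a b d.
Proof.
move=> hpl hsurj q b s hs.
have [hq hs0 hs1] := param_offset hs.
rewrite hq.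
apply: NNPP => NG.
pose z t := param b (s + t).
pose Av (P : R -> Prop) dl := forall t, 0 < t -> t < dl -> t < olen b - s -> ~ P t.
have Avm : forall P d d', 0 < d' -> d' <= d -> Av P d -> Av P d'.
  by move=> P d d' _ hd' hA t t0 t1 t2; apply: hA => //; lra.
have hpiece : forall (e : mE S') u v, 0 <= u -> u < v -> v <= mlen e ->
   lin_piece psi (e, true) u v ->
   exists2 dl, 0 < dl & Av (fun t => exists2 x, u <= x <= v & psi (param (e, true) x) = z t) dl.
  move=> e u v hu huv hv [hc | [b0 [be [d0 [hd0 hbe hbl hl]]]]].
    have [dl hdl hA] := avoid_pt (psi (param (e, true) u)) hs0 hs1.
    exists dl => // t t0 t1 t2 [x hx E].
    by move: (hA t t0 t1 t2); rewrite /z in E; rewrite -E hc // eqxx.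
  have key : forall t x, 0 < t -> t < olen b - s -> u <= x <= v ->
      psi (param (e, true) x) = z t ->
      b0.1 = b.1 /\ (if b.2 == b0.2 then be + d0 * (x - u) = s + t
                     else be + d0 * (x - u) = mlen b.1 - (s + t)).
    move=> t x t0 t1 hx; rewrite hl // /z => E.
    by apply: (param_eq_int _ _ (esym E)); lra.
  have hx1 : forall x, u <= x <= v -> be <= be + d0 * (x - u) <= be + d0 * (v - u).
    by move=> x /andP [x0 x1]; apply/andP; split; nra.
  case: (eqVneq b0.1 b.1) => e1; last first.
    exists 1; first exact: ltr01.
    move=> t t0 t1 t2 [x hx E]; have [h _] := key t x t0 t2 hx E.
    by rewrite h eqxx in e1.
  case: (eqVneq b.2 b0.2) => e2.
  + have eb : b0 = b by apply: pair_eq2.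
    case: (ltrP s be) => c1.
      exists (be - s); first lra.
      move=> t t0 t1 t2 [x hx E]; have [_] := key t x t0 t2 hx E.
      rewrite e2 eqxx; have := hx1 x hx; lra.
    case: (ltrP s (be + d0 * (v - u))) => c2.
      exfalso; apply: NG; apply: (good_same (e := e) (u := u) (v := v) (be := be) (d0 := d0)) => //.
        by rewrite -eb.
      by move=> x hx; rewrite -eb hl.
    exists 1; first exact: ltr01.
    move=> t t0 t1 t2 [x hx E]; have [_] := key t x t0 t2 hx E.
    rewrite e2 eqxx; have := hx1 x hx; lra.
  + have eb : b0 = orev b.
      by apply: pair_eq2 => //=; move: e2; case: b.2; case: b0.2.
    have ebl : olen b0 = olen b by rewrite eb.
    rewrite /olen in hs1.
    case: (lerP (mlen b.1 - s) be) => c1.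
      exists 1; first exact: ltr01.
      move=> t t0 t1 t2 [x hx E]; have [_] := key t x t0 t2 hx E.
      rewrite (negbTE e2); have := hx1 x hx; lra.
    case: (lerP (mlen b.1 - s) (be + d0 * (v - u))) => c2.
      exfalso; apply: NG; apply: (good_opp (e := e) (u := u) (v := v) (be := be) (d0 := d0)) => //.
      - by rewrite -ebl.
      by move=> x hx; rewrite -eb hl.
    exists (mlen b.1 - s - (be + d0 * (v - u))); first lra.
    move=> t t0 t1 t2 [x hx E]; have [_] := key t x t0 t2 hx E.
    rewrite (negbTE e2); have := hx1 x hx; lra.
have hE : forall e : mE S', exists2 dl, 0 < dl &
    Av (fun t => exists2 x, 0 <= x <= mlen e & psi (param (e, true) x) = z t) dl.
  move=> e; have [n [u [u0 un hu hpc]]] := hpl e.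
  have hb := part_bounds u0 un hu.
  have [dl hdl hA] := @fin_min R _ (iota 0 n)
     (fun i dl => Av (fun t => exists2 x, u i <= x <= u i.+1 & psi (param (e, true) x) = z t) dl)
     (fun i => Avm _) ltac:(move=> i; rewrite mem_iota add0n => /andP [_ hi];
        have [hb0 _] := hb i ltac:(lia); have [_ hb1] := hb i.+1 ltac:(lia);
        exact: hpiece hb0 (hu i hi) hb1 (hpc i hi)).
  exists dl => // t t0 t1 t2 [x /andP [x0 x1] E].
  have [i [hi hx0 hx1]] := @locate_closed R u n x hu ltac:(by rewrite u0) ltac:(by rewrite un)
     ltac:(by rewrite u0 un mlen_gt0).
  have hi' : i \in iota 0 n by rewrite mem_iota add0n leq0n hi.
  by apply: (hA i hi' t t0 t1 t2); exists x => //; apply/andP; split.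
have [dE hdE hAE] := @fin_min R _ (enum (mE S'))
   (fun e dl => Av (fun t => exists2 x, 0 <= x <= mlen e & psi (param (e, true) x) = z t) dl)
   (fun e => Avm _) (fun e _ => hE e).
have [dV hdV hAV] := @fin_min R _ (enum (mV S'))
   (fun v dl => Av (fun t => psi (vpt v) = z t) dl)
   (fun v => Avm _)
   ltac:(move=> v _; have [dl hdl hA] := avoid_pt (psi (vpt v)) hs0 hs1;
         by exists dl => // t t0 t1 t2 E; move: (hA t t0 t1 t2); rewrite /z E eqxx).
set t := Num.min (Num.min dE dV) (olen b - s) / 2.
have hm : 0 < Num.min (Num.min dE dV) (olen b - s) by rewrite !lt_min hdE hdV /=; lra.
have hm1 : Num.min (Num.min dE dV) (olen b - s) <= dE by rewrite !ge_min lexx.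
have hm2 : Num.min (Num.min dE dV) (olen b - s) <= dV by rewrite !ge_min lexx orbT.
have hm3 : Num.min (Num.min dE dV) (olen b - s) <= olen b - s by rewrite !ge_min lexx orbT.
have t0 : 0 < t by rewrite /t; lra.
have [p' hp'] := hsurj (z t).
case: p' hp' => [[v|[e x]] hv] E.
  have ev : exist (fun p => validpt p) (inl v) hv = vpt v by apply: pt_eq.
  rewrite ev in E.
  by apply: (hAV v (mem_enum _ _) t t0 ltac:(rewrite /t; lra) ltac:(rewrite /t; lra)).
have /andP [hx0 hx1] := hv.
apply: (hAE e (mem_enum _ _) t t0 ltac:(rewrite /t; lra) ltac:(rewrite /t; lra)).
exists x; first by apply/andP; split; lra.
rewrite -E; congr psi; apply: pt_eq; rewrite param_val //.
Qed.

Definition germ_prop (R : realType) (G H : mgraph R) (f : point G -> point H) :=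
  forall q b s, offset q b = Some s -> germ_const f q b \/ exists b2 d, germ_lin f q b b2 d.

Lemma phi_germ (R : realType) (S S' S'' : mgraph R)
    (phi : point S -> point S'') (psi : point S' -> point S) :
  (forall e, pl_edge psi e) -> (forall q, exists p, psi p = q) ->
  (forall e, pl_edge (fun p => phi (psi p)) e) -> germ_prop phi.
Proof.
move=> hpl hsurj hplc q b s hs.
have [p [a [d1 [<- hg]]]] := LC hpl hsurj hs.
have [sa [r [hsa _ _ _]]] := hg.
case: (germ_of_pl hplc hsa) => [hc | [b2 [d hl]]].
  by left; apply: div_const hg hc.
by right; exists b2, (d / d1); apply: div_lin hg hl.
Qed.

Lemma fwd_piece (R : realType) (G H : mgraph R) (f : point G -> point H) :
  germ_prop f -> forall e x, 0 <= x -> x < mlen e ->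
  exists y, [/\ x < y, y <= mlen e & lin_piece f (e, true) x y].
Proof.
move=> hg e x hx0 hx1.
have ho : offset (param (e, true) x) (e, true) = Some x by apply: offset_param.
case: (hg _ _ _ ho) => [[s' [hs' [eta he h]]] | [b [d [s' [r [hs' hr hd [eta he [h1 h2 h3]]]]]]]];
  move: hs'; rewrite ho => -[es]; subst s'.
  exists (Num.min (x + eta) (mlen e)); split.
  - by rewrite lt_min; apply/andP; split; lra.
  - by rewrite ge_min lexx orbT.
  left => z /andP [z0 z1].
  have z2 : z <= x + eta by move: z1; rewrite le_min => /andP [].
  have -> : z = x + (z - x) by ring.
  rewrite h; last by apply/andP; split; lra.
  by rewrite -(addr0 x) h ?addr0 // lexx ltW.
exists (x + eta); split; first lra.
  by rewrite /olen /= in h1.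
right; exists b, r, d; split => //.
- by have [] := param_offset hr.
- by have -> : x + eta - x = eta by ring.
move=> z /andP [z0 z1].
have -> : z = x + (z - x) by ring.
rewrite h3; last by apply/andP; split; lra.
by congr (param _ (_ + _ * _)); ring.
Qed.

Lemma bwd_piece (R : realType) (G H : mgraph R) (f : point G -> point H) :
  germ_prop f -> forall e x, 0 < x -> x <= mlen e ->
  exists y, [/\ 0 <= y, y < x & lin_piece f (e, true) y x].
Proof.
move=> hg e x hx0 hx1.
have hq : param (e, true) x = param (e, false) (mlen e - x).
  by rewrite param_false; congr (param _ _); ring.
have ho : offset (param (e, true) x) (e, false) = Some (mlen e - x).
  by rewrite hq; apply: offset_param; rewrite /olen /=; lra.
have hz : forall z, param (e, true) z = param (e, false) (mlen e - x + (x - z)).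
  by move=> z; rewrite param_false; congr (param _ _); ring.
case: (hg _ _ _ ho) => [[s' [hs' [eta he h]]] | [b [d [s' [r [hs' hr hd [eta he [h1 h2 h3]]]]]]]];
  move: hs'; rewrite ho => -[es]; subst s'.
  exists (Num.max (x - eta) 0); split.
  - by rewrite le_max lexx orbT.
  - by rewrite gt_max; apply/andP; split; lra.
  left => z /andP [z0 z1].
  have z2 : x - eta <= z by move: z0; rewrite ge_max => /andP [].
  have y0 : x - eta <= Num.max (x - eta) 0 by rewrite le_max lexx.
  have y1 : Num.max (x - eta) 0 <= x by rewrite ge_max; apply/andP; split; lra.
  rewrite (hz z) h; last by apply/andP; split; lra.
  by rewrite (hz (Num.max (x - eta) 0)) h //; apply/andP; split; lra.
rewrite /olen /= in h1.
exists (x - eta); split; [lra | lra | ].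
right; exists (orev b), (olen b - r - d * eta), d; split => //.
- by rewrite /olen /orev /= in h2 *; lra.
- have [_ hr0 _] := param_offset hr.
  have -> : olen b - r - d * eta + d * (x - (x - eta)) = olen b - r by ring.
  by rewrite /olen /orev /= in hr0 *; lra.
move=> z /andP [z0 z1].
rewrite hz h3; last by apply/andP; split; lra.
by rewrite param_rev; congr (param _ _); rewrite /olen /orev /=; ring.
Qed.

Lemma lin_piece_restr (R : realType) (G H : mgraph R) (f : point G -> point H) a u u' v :
  u <= u' -> u' <= v -> lin_piece f a u v -> lin_piece f a u' v.
Proof.
move=> h1 h2 [hc | [b [be [d [hd hbe hbl hl]]]]].
  left => x /andP [x0 x1]; rewrite !hc //; apply/andP; split; lra.
right; exists b, (be + d * (u' - u)), d; split => //.
- have : 0 <= d * (u' - u) by nra.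
  lra.
- have -> : be + d * (u' - u) + d * (v - u') = be + d * (v - u) by ring.
  done.
move=> x /andP [x0 x1]; rewrite hl; last by apply/andP; split; lra.
by congr (param _ _); ring.
Qed.

Definition prefix_ok (R : realType) (G H : mgraph R) (f : point G -> point H) e (y : R) :=
  exists (n : nat) (u : nat -> R),
    [/\ u 0%N = 0, u n = y,
        forall i, (i < n)%N -> u i < u i.+1 &
        forall i, (i < n)%N -> lin_piece f (e, true) (u i) (u i.+1)].

Lemma prefix_ext (R : realType) (G H : mgraph R) (f : point G -> point H) e y y' :
  prefix_ok f e y -> y < y' -> lin_piece f (e, true) y y' -> prefix_ok f e y'.
Proof.
move=> [n [u [u0 un hu hp]]] hy hl.
pose u' := fun i => if (i <= n)%N then u i else y'.
have E1 : forall j, (j <= n)%N -> u' j = u j by move=> j hj; rewrite /u' hj.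
have E2 : u' n.+1 = y' by rewrite /u' ifF //; apply/negbTE; rewrite -ltnNge.
exists n.+1, u'; split.
- by rewrite E1.
- done.
- move=> i hi; case: (ltnP i n) => h.
    by rewrite !E1 ?(ltnW h) //; apply: hu.
  have -> : i = n by lia.
  by rewrite E2 E1 // un.
- move=> i hi; case: (ltnP i n) => h.
    by rewrite !E1 ?(ltnW h) //; apply: hp.
  have -> : i = n by lia.
  by rewrite E2 E1 // un.
Qed.

Lemma pl_edge_of_germ (R : realType) (G H : mgraph R) (f : point G -> point H) :
  germ_prop f -> forall e, pl_edge f e.
Proof.
move=> hg e.
have hl := mlen_gt0 e.
pose E := (fun y => 0 <= y <= mlen e /\ prefix_ok f e y) : classical_sets.set R.
have E0 : E 0.
  split; first by rewrite lexx ltW.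
  by exists 0%N, (fun _ => 0); split.
have hub : classical_sets.ubound E (mlen e) by move=> y [/andP [_ h] _].
have hsup : classical_sets.has_sup E by split; [exists 0 | exists (mlen e)].
set sg := sup E.
have sg0 : 0 <= sg by apply: sup_upper_bound.
have sg1 : sg <= mlen e by apply: ge_sup => //; exists 0.
have Esg : E sg.
  case: (lerP sg 0) => hs.
    by have -> : sg = 0 by lra.
  have [y0 [y00 y01 hl0]] := bwd_piece hg (e := e) hs sg1.
  have [y [Ey hy1 hy3]] : exists y, [/\ E y, y0 < y & y <= sg].
    have [y Ey hy] := sup_adherent (E := E) (eps := sg - y0) ltac:(lra) hsup.
    rewrite -/sg in hy; exists y; split => //; first lra.
    exact: sup_upper_bound.
  case: (ltrP y sg) => hy2.
    split; first by apply/andP; split.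
    case: Ey => _ hp; apply: prefix_ext hp hy2 _.
    by apply: lin_piece_restr hl0; lra.
  by have -> : sg = y by lra.
suff : sg = mlen e by move=> h; case: Esg => _; rewrite h.
case: (ltrP sg (mlen e)) => h; last lra.
have [y1 [hy1 hy2 hl1]] := fwd_piece hg sg0 h.
have Ey1 : E y1.
  split; first by apply/andP; split; lra.
  by case: Esg => _ hp; apply: prefix_ext hp hy1 hl1.
have := sup_upper_bound hsup Ey1; rewrite -/sg; lra.
Qed.

Lemma open_dir (R : realType) (G : mgraph R) (U : point G -> Prop) p a s :
  gopen U -> U p -> offset p a = Some s ->
  exists2 eta, 0 < eta & forall t, 0 <= t <= eta -> U (param a (s + t)).
Proof.
move=> hU hp hs.
have [hpe hs0 hs1] := param_offset hs.
rewrite /olen in hs1.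
set X := if a.2 then s else mlen a.1 - s.
have hX : 0 <= X <= mlen a.1 by apply/andP; rewrite /X; case: a.2; split; lra.
have hpX : p = param (a.1, true) X by rewrite hpe param_norm.
have [eps he heps] := hU a.1 X hX ltac:(by rewrite -hpX).
exists (Num.min (eps / 2) (mlen a.1 - s)).
  by rewrite lt_min; apply/andP; split; lra.
move=> t /andP [t0 t1].
have t2 : t <= eps / 2 by move: t1; rewrite le_min => /andP [].
have t3 : t <= mlen a.1 - s by move: t1; rewrite le_min => /andP [].
rewrite param_norm.
apply: heps.
  by apply/andP; case: a.2 => /=; split; lra.
rewrite ltr_norml /X; apply/andP; case: a.2 => /=; split; lra.
Qed.

Lemma star_open (R : realType) (G H : mgraph R) (f : point G -> point H) q :
  (forall a s, offset q a = Some s -> germ_const f q a) ->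
  exists U, [/\ gopen U, U q & forall q', U q' -> f q' = f q].
Proof.
move=> hc.
have [eta he hA] : exists2 eta, 0 < eta & forall a : oedge G, a \in enum {: mE G * bool} ->
     forall s, offset q a = Some s -> s + eta <= olen a /\
                  forall t, 0 <= t <= eta -> f (param a (s + t)) = f q.
  apply: fin_min.
    move=> a d d' _ hd' hA s hs; have [h1 h2] := hA s hs; split; first lra.
    by move=> t /andP [t0 t1]; apply: h2; apply/andP; split; lra.
  move=> a _; case hs: (offset q a) => [s|]; last by exists 1; rewrite ?ltr01.
  have [s' [hs' [et het h]]] := hc a s hs; move: hs'; rewrite hs => -[es]; subst s'.
  have [_ _ hs1] := param_offset hs.
  exists (Num.min et (olen a - s)); first by rewrite lt_min het /=; lra.
  move=> s'' [es]; subst s''; split.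
    have : Num.min et (olen a - s) <= olen a - s by rewrite ge_min lexx orbT.
    lra.
  move=> t /andP [t0 t1]; apply: h; apply/andP; split => //.
  by apply: le_trans t1 _; rewrite ge_min lexx.
pose U q' := q' = q \/ exists a s t, [/\ offset q a = Some s, 0 <= t, t < eta & q' = param a (s + t)].
exists U; split; last first.
- move=> q' [-> // | [a [s [t [hs t0 t1 ->]]]]].
  by have [_ h] := hA a (mem_enum _ _) s hs; apply: h; apply/andP; split; lra.
- by left.
move=> e x hx HU.
have hl := mlen_gt0 e.
have [hx0 hx1] : 0 <= x /\ x <= mlen e by move/andP: hx.
have qcase : param (e, true) x = q -> exists s t, 0 <= t /\ t < eta /\
     ((offset q (e, true) = Some s /\ s + t = x) \/ (offset q (e, false) = Some s /\ s + t = mlen e - x)).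
  move=> hq; case: (ltrP x (mlen e)) => h.
    exists x, 0; split; first lra; split; first lra.
    by left; split; [rewrite -hq; apply: offset_param | ring].
  have xe : x = mlen e by lra.
  exists 0, 0; split; first lra; split; first lra.
  right; split; last by rewrite xe; ring.
  have E : param (e, true) x = param (e, false) 0.
    by rewrite param_false xe; congr (param _ _); ring.
  by rewrite -hq E; apply: offset_param; rewrite /olen //= lexx.
have R2 : exists s t, 0 <= t /\ t < eta /\
     ((offset q (e, true) = Some s /\ s + t = x) \/ (offset q (e, false) = Some s /\ s + t = mlen e - x)).
  case: HU => [hq | [a [s [t [hs t0 t1 hpa]]]]]; first exact: qcase.
  have [hqa hs0 hs1] := param_offset hs.
  have [hb _] := hA a (mem_enum _ _) s hs.
  case: (ltrP 0 (s + t)) => hw.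
    have [e1 e2] := param_eq_int hw ltac:(lra) (esym hpa).
    exists s, t; split => //; split => //.
    move: hs e2; case: a e1 {hA hqa hs1 hb hpa} => a1 [] /= <- hs e2.
      by left; split.
    by right; split => //; lra.
  apply: qcase; rewrite hpa hqa; congr (param _ _); lra.
have [s [t [t0 [t1 [[hs hst] | [hs hst]]]]]] := R2.
- have [hqs hs0 hs1] := param_offset hs.
  rewrite /olen /= in hs1.
  exists (eta - t); first lra.
  move=> y /andP [y0 y1]; rewrite ltr_norml => /andP [hy1 hy2].
  case: (lerP s y) => hsy.
    right; exists (e, true), s, (y - s); split => //; [lra | lra | congr (param _ _); ring].
  right; exists (e, false), (mlen e - s), (s - y); split.
  + have E : param (e, true) s = param (e, false) (mlen e - s).
      by rewrite param_false; congr (param _ _); ring.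
    rewrite hqs E.
    by apply: offset_param; rewrite /olen /=; lra.
  + lra.
  + lra.
  + by rewrite param_false; congr (param _ _); ring.
- have [hqs hs0 hs1] := param_offset hs.
  rewrite /olen /= in hs1.
  exists (eta - t); first lra.
  move=> y /andP [y0 y1]; rewrite ltr_norml => /andP [hy1 hy2].
  case: (lerP y (mlen e - s)) => hsy.
    right; exists (e, false), s, (mlen e - s - y); split => //; [lra | lra | ].
    by rewrite param_false; congr (param _ _); ring.
  right; exists (e, true), (mlen e - s), (y - (mlen e - s)); split.
  + rewrite hqs param_false.
    by apply: offset_param; rewrite /olen /=; lra.
  + lra.
  + lra.
  + by congr (param _ _); ring.
Qed.

Lemma wt_neq0 (R : realType) (G : mgraph R) (e : mE G) : ((mwt e)%:R : R) != 0.
Proof. by rewrite pnatr_eq0 -lt0n mwt_gt0. Qed.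

Lemma wt_gt0 (R : realType) (G : mgraph R) (e : mE G) : 0 < ((mwt e)%:R : R).
Proof. by rewrite ltr0n mwt_gt0. Qed.

Lemma harm_pos (R : realType) (G H : mgraph R) (f : point G -> point H) p
   (m1 : oedge G -> oedge H) (dd1 : oedge G -> R) (c1 : R) a0 b0 d0 :
  (forall a, isdir p a -> (dd1 a = 0 /\ germ_const f p a) \/ germ_lin f p a (m1 a) (dd1 a)) ->
  (forall b, isdir (f p) b ->
     \sum_(a | isdir p a && (m1 a == b)) ((mwt a.1)%:R / (mwt b.1)%:R * dd1 a) = c1) ->
  germ_lin f p a0 b0 d0 ->
  0 < c1 /\ (forall b, isdir (f p) b -> exists a, isdir p a /\ germ_lin f p a b (dd1 a)).
Proof.
move=> H1 H2 hg.
have nn : forall a, isdir p a -> 0 <= dd1 a.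
  move=> a ha; case: (H1 a ha) => [[-> _] | [s [r [_ _ hd _]]]]; [exact: lexx | exact: ltW].
have [s0 [r0 [hs0 hr0 hd0 _]]] := hg.
have ha0 : isdir p a0 by rewrite /isdir hs0.
have hb0 : isdir (f p) b0 by rewrite /isdir hr0.
have [e1 e2] : m1 a0 = b0 /\ dd1 a0 = d0.
  case: (H1 a0 ha0) => [[_ hc] | hl]; first by case: (germ_const_lin hc hg).
  by have [] := germ_lin_uniq hl hg.
have c1p : 0 < c1.
  rewrite -(H2 b0 hb0) (bigD1 a0) /=; last by rewrite ha0 e1 eqxx.
  set T0 := (_ * dd1 a0).
  set T1 := \sum_(i | _) _.
  have t0 : 0 < T0.
    by rewrite /T0 e2; apply: mulr_gt0 => //; apply: divr_gt0; apply: wt_gt0.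
  have t1 : 0 <= T1.
    apply: sumr_ge0 => a /andP [/andP [ha _] _].
    by apply: mulr_ge0; [apply: divr_ge0; apply: ler0n | apply: nn].
  lra.
split => // b hb.
apply: NNPP => hn.
have : c1 = 0.
  rewrite -(H2 b hb); apply: big1 => a /andP [ha /eqP hm].
  case: (H1 a ha) => [[-> _] | hl]; first by rewrite mulr0.
  by exfalso; apply: hn; exists a; rewrite -hm.
lra.
Qed.

Lemma inh_edge (R : realType) (S S' S'' : mgraph R)
    (phi : point S -> point S'') (psi : point S' -> point S) :
  (forall e, pl_edge psi e) -> (forall q, exists p, psi p = q) ->
  (forall p : point S', isbnd p -> isbnd (psi p)) ->
  (forall p, ~~ isbnd p -> harmonic_at (fun p => phi (psi p)) p) ->
  oedge S -> inhabited (oedge S'').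
Proof.
move=> hpl hsurj hbnd hh a.
have hl := mlen_gt0 a.1.
set q1 := param (a.1, true) (mlen a.1 / 2).
have ho : offset q1 (a.1, true) = Some (mlen a.1 / 2).
  by apply: offset_param; rewrite /olen /=; lra.
have hq1 : ~~ isbnd q1.
  by rewrite /isbnd /q1 param_val //= /olen /=; lra.
have [p [a0 [d [hp hg]]]] := LC hpl hsurj ho.
have hnp : ~~ isbnd p by apply/negP => /hbnd; rewrite hp (negbTE hq1).
have [m2 _] := hh p hnp.
by constructor; exact: (m2 a0).
Qed.

Theorem lemma3p10 (R : realType) (S S' S'' : mgraph R)
    (phi : point S -> point S'') (psi : point S' -> point S) :
  gcontinuous phi ->
  harmonic psi ->
  (forall q : point S, exists p : point S', psi p = q) ->
  (forall p : point S', isbnd p -> isbnd (psi p)) ->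
  harmonic (fun p => phi (psi p)) ->
  harmonic phi.
Proof.
move=> hcont [[_ hpl hb1] hh1] hsurj hbnd [[_ hplc hbc] hhc].
have hg := phi_germ hpl hsurj hplc.
have nbp : forall q p, psi p = q -> ~~ isbnd q -> ~~ isbnd p.
  by move=> q p <- hq; apply/negP => /hbnd; rewrite (negbTE hq).
split; first split.
- exact: hcont.
- exact: pl_edge_of_germ.
- move=> q hbq hnlc; apply: NNPP => hq; move/negP: hq => hq; apply: hnlc.
  apply: star_open => b s hs.
  have [p [a0 [d0 [hp hgl]]]] := LC hpl hsurj hs.
  have hnp := nbp q p hp hq.
  have [U' [hU' hU'p hU'c]] : exists U, [/\ gopen U, U p & forall q', U q' -> phi (psi q') = phi (psi p)].
    apply: NNPP => hn; move: (hbc p); rewrite {1}hp => /(_ hbq) /(_ hn).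
    by rewrite (negbTE hnp).
  have [m1 [dd1 [c1 [H1a H1b]]]] := hh1 p hnp.
  have [_ hdir] := harm_pos H1a H1b hgl.
  have [a [ha hla]] := hdir b ltac:(by rewrite /isdir hp hs).
  rewrite -hp; apply: (div_const hla).
  have [sa [ra [hsa _ _ _]]] := hla.
  have [eta he hU] := open_dir hU' hU'p hsa.
  by exists sa; split => //; exists eta => // t ht; apply: hU'c; apply: hU.
move=> q hq.
case: (classic (exists b, isdir q b)) => [[b0 hb0] | hno]; last first.
  case: (classic (exists a : oedge S, True)) => [[a _] | hne].
    have [z] := @inh_edge _ _ _ _ phi psi hpl hsurj hbnd hhc a.
    exists (fun _ => z), (fun _ => 0), 0; split.
      by move=> a' ha'; exfalso; apply: hno; exists a'.
    move=> b _; apply: big_pred0 => a'; apply/negbTE; apply/negP => /andP [ha' _].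
    by apply: hno; exists a'.
  have F : oedge S -> oedge S'' by move=> a; exfalso; apply: hne; exists a.
  exists F, (fun _ => 0), 0; split.
    by move=> a' ha'; exfalso; apply: hno; exists a'.
  move=> b _; apply: big_pred0 => a'; apply/negbTE; apply/negP => /andP [ha' _].
  by apply: hno; exists a'.
move: hb0; rewrite /isdir; case hs0 : (offset q b0) => [s0|] // _.
have [p [a0 [d0 [hp hgl]]]] := LC hpl hsurj hs0.
have hnp := nbp q p hp hq.
have [m1 [dd1 [c1 [H1a H1b]]]] := hh1 p hnp.
have [m2 [dd2 [c2 [H2a H2b]]]] := hhc p hnp.
have [c1p _] := harm_pos H1a H1b hgl.
have inh := @inh_edge _ _ _ _ phi psi hpl hsurj hbnd hhc.
have hF : forall b : oedge S, exists x : oedge S'' * R,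
    isdir q b -> (x.2 = 0 /\ germ_const phi q b) \/ germ_lin phi q b x.1 x.2.
  move=> b; have [z] := inh b.
  case hsb : (offset q b) => [sb|]; last by exists (z, 0); rewrite /isdir hsb.
  case: (hg q b sb hsb) => [hc | [b2 [d hl]]].
    by exists (z, 0) => _; left.
  by exists (b2, d) => _; right.
pose Fx := fun b => proj1_sig (constructive_indefinite_description _ (hF b)).
have hFx : forall b, isdir q b -> ((Fx b).2 = 0 /\ germ_const phi q b) \/ germ_lin phi q b (Fx b).1 (Fx b).2.
  by move=> b; exact: (proj2_sig (constructive_indefinite_description _ (hF b))).
pose m := fun b => (Fx b).1.
pose dd := fun b => (Fx b).2.
have key : forall a, isdir p a ->
    [/\ dd2 a = dd (m1 a) * dd1 a, dd2 a != 0 -> m2 a = m (m1 a) & dd1 a != 0 -> isdir q (m1 a)].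
  move=> a ha.
  have comp0 : germ_const (fun x => phi (psi x)) p a -> dd2 a = 0.
    move=> hc; case: (H2a a ha) => [[-> _] // | hl].
    by case: (germ_const_lin hc hl).
  case: (H1a a ha) => [[e0 [s [hs [eta he hc]]]] | hl1].
    have hcc : germ_const (fun x => phi (psi x)) p a.
      by exists s; split => //; exists eta => // t ht; rewrite hc.
    rewrite e0 mulr0 comp0 //; split => //; by rewrite eqxx.
  have hdq : isdir q (m1 a).
    by have [s [r [_ hr _ _]]] := hl1; rewrite /isdir -hp hr.
  case: (hFx (m1 a) hdq) => [[e0 hc] | hl2].
    rewrite /dd e0 mul0r comp0; last by apply: (comp_lin_const hl1); rewrite hp.
    by split => //; rewrite eqxx.
  have hl3 := comp_lin_lin hl1 (ltac:(rewrite hp; exact: hl2)).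
  case: (H2a a ha) => [[_ hc] | hl4]; first by case: (germ_const_lin hc hl3).
  by have [-> ->] := germ_lin_uniq hl4 hl3; split.
exists m, dd, (c2 / c1); split; first exact: hFx.
move=> b'' hb''.
have Wn : forall x : oedge S'', ((mwt x.1)%:R : R) != 0 by move=> x; apply: wt_neq0.
have Wn' : forall x : oedge S, ((mwt x.1)%:R : R) != 0 by move=> x; apply: wt_neq0.
set Sb := \sum_(b | isdir q b && (m b == b'')) _.
suff : c2 = Sb * c1.
  move=> ->; field; rewrite gt_eqF //.
rewrite -(H2b b''); last by rewrite hp.
rewrite big_mkcondr /=.
rewrite (eq_bigr (fun a => if isdir q (m1 a) && (m (m1 a) == b'')
     then (mwt a.1)%:R / (mwt b''.1)%:R * (dd (m1 a) * dd1 a) else 0)); last first.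
  move=> a ha; have [k1 k2 k3] := key a ha.
  case: (eqVneq (dd2 a) 0) => hz.
    rewrite hz mulr0 -k1 hz mulr0; by case: ifP; case: ifP.
  have hd1 : dd1 a != 0 by apply: contra hz; rewrite k1 => /eqP ->; rewrite mulr0.
  by rewrite (k2 hz) (k3 hd1) /= k1.
rewrite -big_mkcondr /=.
rewrite (partition_big m1 (fun b => isdir q b && (m b == b''))); last first.
  by move=> a /andP [_ /andP [h1 h2]]; rewrite h1 h2.
rewrite /Sb mulr_suml; apply: eq_bigr => b /andP [hbb1 /eqP hbb2].
rewrite -(H1b b); last by rewrite hp.
rewrite mulr_sumr.
apply: eq_big.
  move=> a; case: (eqVneq (m1 a) b) => hm /=; last by rewrite !andbF.
  by rewrite hm hbb1 hbb2 eqxx !andbT.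
move=> a /andP [_ /eqP hm]; rewrite hm.
field.
by rewrite (Wn' b) (Wn b'').
Qed.
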